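(* Let $\mathbf C$ be a clone $\tau$-algebra and $c\in C$. If $c$ is $n$-central for some $n$, then for every $m\ge1$: $c$ is $m$-central if and only if $m\ge\gamma(c)$.
   Context: A clone $\tau$-algebra is an algebra $\mathbf C=(C,\sigma^{\mathbf C}\ (\sigma\in\tau),q_n^{\mathbf C}\ (n\ge0),\mathsf e_i^{\mathbf C}\ (i\ge1))$ with $\mathsf e_i$ nullary, $q_n$ of arity $n+1$, satisfying: (C1) $q_n(\mathsf e_i,x_1,\dots,x_n)=x_i$ ($1\le i\le n$); (C2) $q_n(\mathsf e_j,x_1,\dots,x_n)=\mathsf e_j$ ($j>n$); (C3) $q_n(x,\mathsf e_1,\dots,\mathsf e_n)=x$; (C4) $q_k(x,y_1,\dots,y_k)=q_n(x,y_1,\dots,y_k,\mathsf e_{k+1},\dots,\mathsf e_n)$ ($n>k$); (C5) $q_n(q_n(x,\mathbf y),\mathbf z)=q_n(x,q_n(y_1,\mathbf z),\dots,q_n(y_n,\mathbf z))$; (C6) $q_n(\sigma(x_1,\dots,x_k),\mathbf y)=\sigma(q_n(x_1,\mathbf y),\dots,q_n(x_k,\mathbf y))$ for $\sigma\in\tau$ of arity $k$. An element $a$ is independent of $\mathsf e_n$ if $q_n(a,\mathsf e_1,\dots,\mathsf e_{n-1},\mathsf e_{n+1})=a$, dependent otherwise; $\gamma(a)$ is $\omega$ if $a$ depends on infinitely many $\mathsf e_i$, $0$ if on none, otherwise the largest $i$ with $a$ dependent on $\mathsf e_i$. For $a,b\in C$, $\theta(a,b)$ is the smallest congruence of $\mathbf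 C$ containing $(a,b)$. An element $c$ is $n$-central if $\theta(c,\mathsf e_1),\dots,\theta(c,\mathsf e_n)$ is an $n$-tuple of complementary factor congruences, i.e. $\bigcap_i\theta(c,\mathsf e_i)$ is the identity relation and for all $a_1,\dots,a_n\in C$ there is a unique $u\in C$ with $a_i\,\theta(c,\mathsf e_i)\,u$ for all $i$; equivalently, $(a_1,\dots,a_n)\mapsto q_n(c,a_1,\dots,a_n)$ is a homomorphism $\mathbf C^n\to\mathbf C$ satisfying $q_n(c,x,\dots,x)=x$ and $q_n(c,q_n(c,x_{11},\dots,x_{1n}),\dots,q_n(c,x_{n1},\dots,x_{nn}))=q_n(c,x_{11},\dots,x_{nn})$. *)

(* Defs.v *)
From mathcomp Require Import all_boot.
From Stdlib Require Import ClassicalEpsilon.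
Set Implicit Arguments. Unset Strict Implicit. Unset Printing Implicit Defensive.

Record signature := Signature { sym : Type; arity : sym -> nat }.

(* Conventions: an n-tuple is a function 'I_n -> C; the (0-based) position i
   of a tuple corresponds to the paper's (1-based) index i+1.
   The nullary constants e_i (i >= 1) are [ce i]; [ce 0] is an unused junk
   value (no axiom mentions it; nullary operations do not affect congruences). *)
Record clone_algebra (tau : signature) := CloneAlgebra {
  car :> Type;
  sop : forall s : sym tau, ('I_(arity s) -> car) -> car;
  cq  : forall n : nat, car -> ('I_n -> car) -> car;
  ce  : nat -> car;
  ax_C1 : forall n (x : 'I_n -> car) (i : 'I_n), cq (ce i.+1) x = x i;
  ax_C2 : forall n (x : 'I_n -> car) j, n < j -> cq (ce j) x = ce j;
  ax_C3 : forall n a, cq a (fun i : 'I_n => ce i.+1) = a;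
  ax_C4 : forall k n, k < n -> forall a (y : 'I_k -> car),
      cq a y = cq a (fun i : 'I_n =>
                       match (insub (val i) : option 'I_k) with
                       | Some j => y j
                       | None => ce i.+1 end);
  ax_C5 : forall n a (y z : 'I_n -> car),
      cq (cq a y) z = cq a (fun i => cq (y i) z);
  ax_C6 : forall (s : sym tau) (x : 'I_(arity s) -> car) n (y : 'I_n -> car),
      cq (sop x) y = sop (fun i => cq (x i) y)
}.

Section Defs.
Variables (tau : signature) (C : clone_algebra tau).

(* Congruence of the clone tau-algebra: equivalence compatible with all
   operations sigma in tau and all q_n (nullary e_i are trivially compatible). *)
Definition is_congruence (R : C -> C -> Prop) : Prop :=
  [/\ (forall x, R x x),
      (forall x y, R x y -> R y x),
      (forall x y z, R x y -> R y z -> R x z),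
      (forall (s : sym tau) (x y : 'I_(arity s) -> C),
          (forall i, R (x i) (y i)) -> R (sop x) (sop y)) &
      (forall n (a b : C) (x y : 'I_n -> C),
          R a b -> (forall i, R (x i) (y i)) -> R (cq a x) (cq b y))].

Definition theta (a b : C) : C -> C -> Prop :=
  fun x y => forall R, is_congruence R -> R a b -> R x y.

(* c is n-central: theta(c,e_1),...,theta(c,e_n) are complementary factor
   congruences. *)
Definition central (n : nat) (c : C) : Prop :=
  (forall x y : C, (forall i : 'I_n, theta c (ce C i.+1) x y) -> x = y) /\
  (forall a : 'I_n -> C, exists! u : C,
      forall i : 'I_n, theta c (ce C i.+1) (a i) u).

Definition independent (a : C) (n : nat) : Prop :=
  cq a (fun i : 'I_n => if i.+1 == n then ce C n.+1 else ce C i.+1) = a.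
Definition dependent (a : C) (n : nat) : Prop := ~ independent a n.

(* Specification of gamma(a) in nat + {omega}; None stands for omega. *)
Definition gamma_spec (a : C) (g : option nat) : Prop :=
  match g with
  | None => forall N, exists k, N < k /\ dependent a k
  | Some 0 => forall k, 0 < k -> independent a k
  | Some k => dependent a k /\ forall j, k < j -> independent a j
  end.

Definition gamma (a : C) : option nat :=
  epsilon (inhabits None) (gamma_spec a).

Definition ge_gamma (m : nat) (a : C) : Prop :=
  match gamma a with None => False | Some k => k <= m end.

End Defs.

(* Main.v *)
Require Import Defs.
From mathcomp Require Import all_boot.
From Stdlib Require Import Classical ClassicalEpsilon.

Section Aux.
Context {tau : signature} {C : clone_algebra tau}.

Lemma theta_cong (a b : C) : is_congruence (theta a b).
Proof.
split.
- by move=> x R HR _; case: HR.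
- by move=> x y H R HR Hab; case: (HR) => _ Hs _ _ _; apply: Hs; apply: H.
- move=> x y z H1 H2 R HR Hab; case: (HR) => _ _ Ht _ _.
  exact: Ht (H1 R HR Hab) (H2 R HR Hab).
- move=> s x y H R HR Hab; case: (HR) => _ _ _ Hop _; apply: Hop => i; exact: H.
- move=> n a' b' x y Hab' Hxy R HR Hab; case: (HR) => _ _ _ _ Hq.
  apply: Hq; first exact: Hab'.
  move=> i; exact: Hxy.
Qed.

Lemma theta_base (a b : C) : theta a b a b.
Proof. by move=> R _. Qed.

Lemma th_sym {a b x y : C} : theta a b x y -> theta a b y x.
Proof. by case: (theta_cong a b) => _ Hs _ _ _; apply: Hs. Qed.

Lemma th_trans {a b x y z : C} : theta a b x y -> theta a b y z -> theta a b x z.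
Proof. by case: (theta_cong a b) => _ _ Ht _ _; apply: Ht. Qed.

Lemma th_q (a b : C) {n} (y : 'I_n -> C) : theta a b (cq a y) (cq b y).
Proof.
case: (theta_cong a b) => Hr _ _ _ Hq; apply: Hq; first exact: theta_base.
by move=> i; apply: Hr.
Qed.

Lemma th_total (c : C) j : independent c j.+1 ->
  forall x y, theta c (ce C j.+1) x y.
Proof.
rewrite /independent => Hi x y.
set f := (fun i : 'I_j.+1 => _) in Hi.
have h1 : theta c (ce C j.+1) c (ce C j.+2).
  have := th_q c (ce C j.+1) f.
  rewrite Hi.
  have -> : cq (ce C j.+1) f = f ord_max by exact: (ax_C1 f ord_max).
  by rewrite /f /= eqxx.
have h2 : theta c (ce C j.+1) (ce C j.+1) (ce C j.+2).
  exact: th_trans (th_sym (theta_base c (ce C j.+1))) h1.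
pose z := fun i : 'I_j.+2 => if val i == j then x else y.
have hx : cq (ce C j.+1) z = x.
  have := ax_C1 z (Ordinal (leqW (ltnSn j))).
  by rewrite /z /= eqxx.
have hy : cq (ce C j.+2) z = y.
  have := ax_C1 z ord_max.
  rewrite /z /= => ->.
  by rewrite (gtn_eqF (ltnSn j)).
rewrite -hx -hy.
case: (theta_cong c (ce C j.+1)) => Hr _ _ _ Hq; apply: Hq => //.
Qed.

Lemma central_of_inter {m} {c : C} :
  (forall x y : C, (forall i : 'I_m, theta c (ce C i.+1) x y) -> x = y) ->
  central m c.
Proof.
move=> H; split => // a.
have Ha : forall i : 'I_m, theta c (ce C i.+1) (a i) (cq c a).
  move=> i; have := th_q c (ce C i.+1) a.
  rewrite ax_C1; exact: th_sym.
exists (cq c a); split => // u Hu.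
apply: H => i; exact: th_trans (th_sym (Ha i)) (Hu i).
Qed.

Lemma indep_of_central {m} {c : C} : central m c -> forall j, m < j -> independent c j.
Proof.
move=> [H _] j Hmj.
apply: H => i.
rewrite /independent.
set f := (fun i : 'I_j => _).
have Hle : m <= j by exact: ltnW.
apply: th_trans (th_q c (ce C i.+1) f) _.
have -> : cq (ce C i.+1) f = f (widen_ord Hle i) by exact: (ax_C1 f (widen_ord Hle i)).
rewrite /f /= ltn_eqF; last exact: leq_ltn_trans (ltn_ord i) Hmj.
exact: th_sym (theta_base _ _).
Qed.

Lemma gamma_ok (c : C) : gamma_spec c (gamma c).
Proof.
rewrite /gamma; apply: epsilon_spec.
case: (classic (forall N, exists k, N < k /\ dependent c k)) => H.
  by exists None.
have [N HN] : exists N, forall k, N < k -> independent c k.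
  apply: NNPP => H'; apply: H => N; apply: NNPP => H2; apply: H'.
  exists N => k Hk; apply: NNPP => H3; apply: H2; exists k; split => //.
elim: N HN => [|N IH] HN.
  by exists (Some 0) => k; apply: HN.
case: (classic (independent c N.+1)) => Hi.
  apply: IH => k Hk; rewrite leq_eqVlt in Hk.
  by case/orP: Hk => [/eqP <- | Hk] //; apply: HN.
by exists (Some N.+1); split.
Qed.

End Aux.

Theorem proposition11p3 (tau : signature) (C : clone_algebra tau) (c : C) :
  (exists n : nat, central n c) ->
  forall m : nat, 1 <= m -> (central m c <-> ge_gamma m c).
Proof.
move=> [n Hn] m Hm; split.
- move=> Hc; have Hind := indep_of_central Hc.
  rewrite /ge_gamma; have := gamma_ok c.
  case: (gamma c) => [k|] /=.
  + case: k => [|k] //= [Hd _].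
    rewrite leqNgt; apply/negP => Hlt; apply: Hd; exact: Hind.
  + move=> HN; case: (HN m) => k [Hk Hd]; by apply: Hd; apply: Hind.
- rewrite /ge_gamma; have := gamma_ok c.
  case: (gamma c) => [k|] //= Hs Hk.
  have Hind : forall j, m < j -> independent c j.
    case: k Hs Hk => [|k] Hs Hk j Hj.
      by apply: Hs; exact: leq_ltn_trans (leq0n m) Hj.
    by apply: (proj2 Hs); exact: leq_ltn_trans Hk Hj.
  apply: central_of_inter => x y Hxy.
  apply: (proj1 Hn) => i.
  case: (ltnP i m) => Him; first exact: (Hxy (Ordinal Him)).
  by apply: th_total; apply: Hind; rewrite ltnS.
Qed.
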